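(* For every subdistribution $\mu$ on $\Sigma$, state assertion $A$ and $p\in[0,1]$: $\mu\vDash(\mathbb{P}[A]=p)\oplus\top$ iff $\mathbb{P}_\mu[A]\ge p$, where $\mathbb{P}_\mu[A]=\sum\{\mu(\sigma):\sigma\in\mathsf{supp}(\mu),\ \sigma\vDash_\Sigma A\}$.
   Context: A subdistribution on a countable set $\Sigma$ is $\mu\colon\Sigma\to[0,1]$ with $|\mu|=\sum_\sigma\mu(\sigma)\le1$; $\mathsf{supp}(\mu)=\{\sigma:\mu(\sigma)>0\}$; $\mu_1+\mu_2$ is the pointwise sum, defined when $|\mu_1|+|\mu_2|\le1$. $\mu\vDash\mathbb{P}[A]=p$ iff $|\mu|=p$ and every $\sigma\in\mathsf{supp}(\mu)$ satisfies $A$; $\mu\vDash\top$ always; $\mu\vDash\varphi\oplus\psi$ iff $\mu=\mu_1+\mu_2$ with $\mu_1\vDash\varphi$, $\mu_2\vDash\psi$. *)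

(* Defs.v *)
From HB Require Import structures.
From mathcomp Require Import all_boot all_order all_algebra.
From mathcomp Require Import all_classical all_reals.
From mathcomp Require Import ereal esum.
Set Implicit Arguments. Unset Strict Implicit. Unset Printing Implicit Defensive.
Import Order.TTheory GRing.Theory Num.Theory.
Local Open Scope classical_set_scope.
Local Open Scope ring_scope.

Section Subdist.
Variables (R : realType) (Sigma : countType).

Definition mass (mu : Sigma -> R) : \bar R := \esum_(s in [set: Sigma]) (mu s)%:E.

Definition is_subdist (mu : Sigma -> R) : Prop :=
  (forall s, 0 <= mu s <= 1) /\ (mass mu <= 1%:E)%E.

Definition supp (mu : Sigma -> R) : set Sigma := [set s | 0 < mu s].

Definition probA (mu : Sigma -> R) (A : set Sigma) : \bar R :=
  \esum_(s in [set s | s \in supp mu /\ A s]) (mu s)%:E.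

Inductive assn : Type :=
| PrEq (A : set Sigma) (p : R)
| Top
| OPlus (phi psi : assn).

Fixpoint sat (mu : Sigma -> R) (phi : assn) : Prop :=
  match phi with
  | PrEq A p => mass mu = p%:E /\ supp mu `<=` A
  | Top => True
  | OPlus phi1 phi2 =>
      exists mu1 mu2 : Sigma -> R,
        is_subdist mu1 /\ is_subdist mu2 /\
        (mass mu1 + mass mu2 <= 1%:E)%E /\
        mu = (fun s => mu1 s + mu2 s) /\
        sat mu1 phi1 /\ sat mu2 phi2
  end.

End Subdist.

(* Main.v *)
Require Import Defs.
From HB Require Import structures.
From mathcomp Require Import all_boot all_order all_algebra.
From mathcomp Require Import all_classical all_reals.
From mathcomp Require Import ereal esum.
Import Order.TTheory GRing.Theory Num.Theory.
Local Open Scope classical_set_scope.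
Local Open Scope ring_scope.

Lemma esumZ (R : realType) (T : choiceType) (S : set T) (a : T -> \bar R) (r : R) :
  (0 <= r) -> (forall i, (0 <= a i)%E) ->
  \esum_(i in S) (r%:E * a i)%E = (r%:E * \esum_(i in S) a i)%E.
Proof.
move=> r0 a0; rewrite /esum -ereal_supZl //; last first.
  by apply/set0P; exists 0%E; exists set0; [exact: fsets_set0|rewrite fsbig_set0].
congr ereal_sup; rewrite image_comp; apply: eq_imagel => X _ /=.
by rewrite ge0_mule_fsumr.
Qed.

Lemma EFin_if (R : realType) (b : bool) (x : R) :
  ((if b then x else 0)%:E = if b then x%:E else 0%E).
Proof. by case: b. Qed.

Theorem lemmaB5 (R : realType) (Sigma : countType) (mu : Sigma -> R)
  (A : set Sigma) (p : R) :
  is_subdist mu -> 0 <= p <= 1 ->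
  (sat mu (OPlus (PrEq A p) (@Top R Sigma)) <-> (p%:E <= probA mu A)%E).
Proof.
move=> [mu01 mumass] /andP[p0 p1].
have mu0 : forall s, 0 <= mu s by move=> s; case/andP: (mu01 s).
set S := [set s | s \in supp mu /\ A s].
have probE : probA mu A = \esum_(s in [set: Sigma]) (if s \in S then mu s else 0)%:E.
  by rewrite /probA esum_mkcond; apply: eq_esum => s _; rewrite EFin_if.
split.
- move=> [mu1 [mu2 [[m1 _] [[m2 _] [_ [Emu [[mass1 supp1] _]]]]]]].
  have m10 : forall s, 0 <= mu1 s by move=> s; case/andP: (m1 s).
  have m20 : forall s, 0 <= mu2 s by move=> s; case/andP: (m2 s).
  rewrite -mass1 probE /mass; apply: le_esum => s _.
  rewrite Emu; case: ifPn => sS; first by rewrite lee_fin lerDl.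
  rewrite lee_fin; apply: contraNT sS; rewrite -ltNge => h.
  rewrite inE /S /=; split; last exact: supp1.
  by rewrite inE /supp /= Emu; apply: (lt_le_trans h); rewrite lerDl.
- move=> hp.
  have probmass : (probA mu A <= 1%:E)%E.
    rewrite probE; apply: le_trans mumass; apply: le_esum => s _.
    by case: ifP => _; rewrite lee_fin.
  have prob0 : (0%:E <= probA mu A)%E by apply: esum_ge0 => s _; rewrite lee_fin.
  have qfin : probA mu A \is a fin_num by rewrite ge0_fin_numE // (le_lt_trans probmass) ?ltry.
  set q := fine (probA mu A).
  have qE : probA mu A = q%:E by rewrite fineK.
  rewrite qE lee_fin in hp; rewrite qE lee_fin in prob0.
  set c := if q == 0 then 0 else p / q.
  have c0 : 0 <= c by rewrite /c; case: ifP => // _; rewrite divr_ge0.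
  have c1 : c <= 1.
    rewrite /c; case: ifPn => // q0; rewrite ler_pdivrMr ?mul1r //.
    by rewrite lt_def q0.
  have cq : c * q = p.
    rewrite /c; case: ifPn => [/eqP q0|q0]; last by rewrite mulfVK.
    by rewrite mul0r; apply/eqP; rewrite eq_le p0 -q0 hp.
  pose mu1 := fun s => if s \in S then c * mu s else 0.
  pose mu2 := fun s => mu s - mu1 s.
  have m1le : forall s, 0 <= mu1 s <= mu s.
    move=> s; rewrite /mu1; case: ifP => _; last by rewrite lexx mu0.
    by rewrite mulr_ge0 // ler_piMl.
  have mass1 : mass mu1 = p%:E.
    rewrite /mass -cq EFinM -qE probE -esumZ //; last by move=> s; case: ifP => _; rewrite lee_fin.
    by apply: eq_esum => s _; rewrite /mu1; case: ifP => _; rewrite ?mule0 // EFinM.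
  have massD : (mass mu1 + mass mu2 = mass mu)%E.
    rewrite /mass -esumD; last by move=> s _; rewrite lee_fin subr_ge0; case/andP: (m1le s).
      by apply: eq_esum => s _; rewrite /mu2 -EFinD addrC subrK.
    by move=> s _; rewrite lee_fin; case/andP: (m1le s).
  have mass10 : (0 <= mass mu1)%E by rewrite mass1 lee_fin.
  exists mu1, mu2; split.
    split; last by rewrite mass1 lee_fin.
    move=> s; case/andP: (m1le s) => -> /= h; apply: (le_trans h); by case/andP: (mu01 s).
  split.
    split.
      move=> s; rewrite /mu2 subr_ge0; case/andP: (m1le s) => a -> /=.
      by case/andP: (mu01 s) => _ h1; rewrite lerBlDr (le_trans h1) // lerDl.
    by apply: le_trans mumass; rewrite -massD leeDr.
  split; first by rewrite massD.
  split; first by apply: funext => s; rewrite /mu2 addrC subrK.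
  split=> //; split => // s; rewrite /supp /= /mu1; case: ifPn => [|_]; last by rewrite ltxx.
  by rewrite inE /S /= => -[].
Qed.
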